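(* Let $G$ be an odd unicyclic graph on $n$ vertices $1,\ldots,n$ and edges $e_1,\ldots,e_n$ with cycle $C$. For an edge $e_k$ and distinct vertices $i,j$: $e_k\notin C$ and $i,j\notin G\setminus e_k[C]$ if and only if $e_k$ is an edge of both $P_{i-i^*}$ and $P_{j-j^*}$. Moreover, for vertices $i,j$ and an edge $e_k$: (a) if $e_k\in C$ and $e_k\in P_{i-j}$, then $d(e_k,i)+d(e_k,j)$ and $d(i,j)$ have different parity; (b) if $e_k\in C$ and $e_k\notin P_{i-j}$, then $d(e_k,i)+d(e_k,j)$ and $d(i,j)$ have the same parity; (c) if $e_k\in P_{i-i^*}\cap P_{j-j^*}$, then $d(e_k,i)+d(e_k,j)$ and $d(i,j)$ have the same parity.
   Context: A unicyclic graph on $n$ vertices is a simple connected graph with $n$ edges; it is odd if its unique cycle $C$ has odd length. $d$ is graph distance; for vertex $j$ and edge $e=\{l,m\}$, $d(e,j):=\min\{d(j,l),d(j,m)\}$. $P_{i-j}$ denotes the shortest path between $i$ and $j$. For a vertex $i$, $i^*$ is the vertex of $C$ closest to $i$ ($i^*=i$ if $i\in C$), and $P_{i-i^*}$ is the unique shortest path from $i$ to $C$. For an edge $e$ not on $C$, $G\setminus e[C]$ is the component of $G\setminus e$ containing $C$; for $e$ on $C$, $G\setminus e[C]:=G\setminus e$. *)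

(* Defs.v *)
From mathcomp Require Import all_boot.
Set Implicit Arguments. Unset Strict Implicit. Unset Printing Implicit Defensive.

Section Graphs.
Variables (T : finType) (g : rel T).

Definition simple_graph := symmetric g /\ forall x, ~~ g x x.

Definition connected_graph := forall x y : T, connect g x y.

Definition edges : {set {set T}} := [set [set p.1; p.2] | p : T * T & g p.1 p.2].

Definition is_cycle (c : seq T) := [&& uniq c, cycle g c & 2 < size c].

Definition on_cycle (c : seq T) (l m : T) :=
  [&& l \in c, m \in c & (next c l == m) || (next c m == l)].

Definition walkb (k : nat) (x y : T) :=
  [exists s : k.-tuple T, path g x s && (last x s == y)].

Definition dist (x y : T) : nat := find (fun k => walkb k x y) (iota 0 #|T|).

Definition distE (l m j : T) : nat := minn (dist j l) (dist j m).

Definition on_sp (l m i j : T) :=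
  exists s : seq T, [/\ path g i s, last i s = j, size s = dist i j &
    [set l; m] \in [seq [set p.1; p.2] | p <- zip (i :: s) s]].

Definition is_star (c : seq T) (i v : T) :=
  v \in c /\ forall w, w \in c -> dist i v <= dist i w.

Definition on_path_to_C (c : seq T) (l m i : T) :=
  exists v, is_star c i v /\ on_sp l m i v.

Definition grem (l m : T) : rel T := [rel x y | g x y && ([set x; y] != [set l; m])].

Definition in_compC (c : seq T) (l m x : T) :=
  on_cycle c l m \/ exists2 v, v \in c & connect (grem l m) x v.

End Graphs.

(* Main.v *)
Require Import Defs.
From mathcomp Require Import all_boot.
Set Implicit Arguments. Unset Strict Implicit. Unset Printing Implicit Defensive.

Section Dist.
Variables (T : finType) (h : rel T).

Lemma walkP k x y :
  reflect (exists s, [/\ path h x s, last x s = y & size s = k]) (walkb h k x y).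
Proof.
apply: (iffP existsP) => [[s /andP[Hp /eqP Hl]]|[s [Hp Hl Hs]]].
  by exists s; split => //; rewrite size_tuple.
have Hs' : size s == k by rewrite Hs.
by exists (Tuple Hs'); rewrite /= Hp Hl eqxx.
Qed.

Lemma dist_le x s : path h x s -> dist h x (last x s) <= size s.
Proof.
move=> Hp; rewrite /dist.
set a := fun k => walkb h k x (last x s).
have [Hlt|Hge] := ltnP (size s) #|T|.
  rewrite leqNgt; apply/negP => Hlt2.
  have := before_find 0 Hlt2; rewrite nth_iota // add0n => Ha.
  have : a (size s) by apply/walkP; exists s.
  by rewrite Ha.
apply: leq_trans Hge; apply: leq_trans (find_size _ _) _.
by rewrite size_iota.
Qed.

Lemma dist_le' x s y : path h x s -> last x s = y -> dist h x y <= size s.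
Proof. by move=> Hp <-; apply: dist_le. Qed.

Lemma dist_ex x y : connect h x y ->
  exists s, [/\ path h x s, last x s = y & size s = dist h x y].
Proof.
move=> /connectP[p Hp ->].
case: (shortenP Hp) => p' Hp' Hu _.
set a := fun k => walkb h k x (last x p').
have Hsz : size p' < #|T|.
  by have := max_card (mem (x :: p')); rewrite (elimT card_uniqP Hu).
have Hhas : has a (iota 0 #|T|).
  apply/hasP; exists (size p'); first by rewrite mem_iota.
  rewrite /a; apply/walkP; exists p'; split => //.
have := nth_find 0 Hhas; rewrite nth_iota; last by move: Hhas; rewrite has_find size_iota.
by rewrite add0n /a => /walkP[s [H1 H2 H3]]; exists s; split.
Qed.

Lemma dist0 x : dist h x x = 0.
Proof. by apply/eqP; rewrite -leqn0; apply: (dist_le' (s := [::])). Qed.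

Lemma dist_step x w y : h x w -> connect h w y -> dist h x y <= (dist h w y).+1.
Proof.
move=> Hxw /dist_ex[s [Hp Hl Hs]].
by rewrite -Hs; apply: (dist_le' (s := w :: s)) => //=; rewrite Hxw.
Qed.

Lemma short_uniq x s : path h x s -> size s = dist h x (last x s) -> uniq (x :: s).
Proof.
move=> Hp Hs; apply/negPn/negP => Hnu.
move: Hs; case: (shortenP Hp) => p' Hp' Hu Hsub Hs.
have H1 := dist_le Hp'.
have : #|x :: p'| <= #|x :: s|.
  apply: subset_leq_card; apply/subsetP => z; rewrite !inE => /orP[->//|/Hsub ->].
  by rewrite orbT.
rewrite (elimT card_uniqP Hu) /=.
have : #|x :: s| < size (x :: s).
  by rewrite ltn_neqAle card_size andbT; apply: contra Hnu => /eqP/card_uniqP.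
rewrite /= => A B.
have : size p' < size s by rewrite -ltnS; apply: leq_trans B A.
by rewrite Hs ltnNge H1.
Qed.

Lemma parent v r : v != r -> connect h v r ->
  exists w, h v w /\ (dist h w r).+1 = dist h v r.
Proof.
move=> Hne /dist_ex[[|w s] [Hp Hl Hs]]; first by rewrite /= in Hl; rewrite Hl eqxx in Hne.
move: Hp => /= /andP[Hvw Hp]; exists w; split => //.
apply/eqP; rewrite eqn_leq -Hs /= ltnS dist_le' //=.
have Hc : connect h w r by apply/connectP; exists s.
by have := dist_step Hvw Hc; rewrite -Hs.
Qed.

End Dist.

From mathcomp Require Import zify.

Section Par.
Variable T : finType.
Implicit Types (g h : rel T) (l m x y : T) (s : seq T).

Lemma path_col (e : rel T) (col : T -> bool) x s :
  (forall a b, e a b -> col a != col b) -> path e x s ->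
  col (last x s) = col x (+) odd (size s).
Proof.
move=> He; elim: s x => [|y s IH] x /=; first by rewrite addbF.
case/andP=> /He Hxy /IH ->.
by move: Hxy; case: (col x); case: (col y); case: (odd (size s)).
Qed.

Lemma odd_cycle_col (e : rel T) (col : T -> bool) c :
  (forall a b, e a b -> col a != col b) -> cycle e c -> ~~ odd (size c).
Proof.
move=> He; case: c => [|x p] //= Hp.
have := path_col He Hp; rewrite last_rcons size_rcons /=.
by case: (col x); case: (odd _).
Qed.

Lemma edges_mem h x y : h x y -> [set x; y] \in edges h.
Proof. by move=> H; rewrite /edges; apply/imsetP; exists (x, y) => //; rewrite inE. Qed.

Lemma set2_eq (a b c d : T) :
  [set a; b] = [set c; d] -> (a = c /\ b = d) \/ (a = d /\ b = c).
Proof.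
move=> E.
have : a \in [set c; d] by rewrite -E set21.
have : b \in [set c; d] by rewrite -E set22.
have : c \in [set a; b] by rewrite E set21.
have : d \in [set a; b] by rewrite E set22.
rewrite !inE => Hd Hc Hb Ha.
have [Eac|Nac] := eqVneq a c.
  subst c; left; split => //; case/orP: Hb => /eqP // Eba; subst b.
  by move: Hd; rewrite orbb => /eqP.
right; move: Ha; rewrite (negbTE Nac) /= => /eqP Ead; split => //.
by move: Hc; rewrite eq_sym (negbTE Nac) /= => /eqP.
Qed.

Lemma tree_parity h r :
  (forall v, connect h v r) -> #|edges h| < #|T| ->
  forall x y, h x y -> odd (dist h x r) != odd (dist h y r).
Proof.
move=> Hc Hcard.
pose P v := odflt r [pick w | h v w && ((dist h w r).+1 == dist h v r)].
have HP v : v != r -> h v (P v) /\ (dist h (P v) r).+1 = dist h v r.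
  move=> Hv; rewrite /P; case: pickP => [w /andP[H1 /eqP H2]|H] //.
  have [w [H1 H2]] := parent Hv (Hc v).
  by have := H w; rewrite H1 H2 eqxx.
pose f v := [set v; P v].
have Hinj : {in [set~ r] &, injective f}.
  move=> v w; rewrite !inE => Hv Hw /set2_eq [[]//|[E1 E2]].
  have [_ A] := HP v Hv; have [_ B] := HP w Hw.
  move: A B; rewrite E2 -E1; lia.
have Hsub : f @: [set~ r] \subset edges h.
  apply/subsetP => E /imsetP[v]; rewrite !inE => Hv ->.
  by apply: edges_mem; case: (HP v Hv).
have Heq : f @: [set~ r] = edges h.
  apply/eqP; rewrite eqEcard Hsub card_in_imset // cardsC1 /=; by move: Hcard; case: #|T|.
move=> x y Hxy; have : [set x; y] \in f @: [set~ r] by rewrite Heq edges_mem.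
case/imsetP => v; rewrite !inE => Hv /set2_eq; have [_ A] := HP v Hv.
by case => [[-> ->]|[-> ->]]; rewrite -A /=; case: odd.
Qed.

Lemma grem_sym g l m : symmetric g -> symmetric (grem g l m).
Proof. by move=> Hs x y; rewrite /grem /= Hs setUC. Qed.

Lemma edges_grem g l m : edges (grem g l m) = edges g :\ [set l; m].
Proof.
apply/setP => E; rewrite /edges !inE; apply/imsetP/andP => [[p]|[HE /imsetP[p]]].
  rewrite inE /= => /andP[Hg Hne] ->; split => //.
  by apply/imsetP; exists p => //; rewrite inE.
by rewrite inE /= => Hg HEp; exists p => //; rewrite inE /grem /= Hg -HEp HE.
Qed.

Lemma card_grem g l m : g l m -> #|edges g| = #|T| -> #|edges (grem g l m)| < #|T|.
Proof.
move=> Hlm Hc; rewrite edges_grem.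
have := cardsD1 [set l; m] (edges g); rewrite edges_mem // Hc.
have : 0 < #|T| by apply/card_gt0P; exists l.
by move=> _ ->.
Qed.

Lemma reroute g l m : symmetric g -> connect (grem g l m) l m ->
  forall x y, connect g x y -> connect (grem g l m) x y.
Proof.
move=> Hs Hlm; apply: connect_sub => x y Hxy.
case Hne: ([set x; y] != [set l; m]).
  by apply: connect1; rewrite /grem /= Hxy Hne.
move/negbFE/eqP: Hne => /set2_eq [[-> ->]|[-> ->]] //.
by rewrite sym_connect_sym //; apply: grem_sym.
Qed.

Definition hasE l m x s := [set l; m] \in [seq [set p.1; p.2] | p <- zip (x :: s) s].

Lemma hasE_cons l m x y s :
  hasE l m x (y :: s) = ([set l; m] == [set x; y]) || hasE l m y s.
Proof. by rewrite /hasE /= in_cons. Qed.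

Lemma hasE_mem l m x s : hasE l m x s -> l \in x :: s /\ m \in x :: s.
Proof.
elim: s x => [|y s IH] x //; rewrite hasE_cons => /orP[/eqP E|/IH [H1 H2]].
  have : l \in [set x; y] by rewrite -E set21.
  have : m \in [set x; y] by rewrite -E set22.
  by rewrite !inE => /orP[]/eqP-> /orP[]/eqP->; rewrite !eqxx ?orbT.
by rewrite in_cons H1 in_cons H2 !orbT.
Qed.

Lemma noE_path g l m x s : path g x s -> ~~ hasE l m x s -> path (grem g l m) x s.
Proof.
elim: s x => [|y s IH] x //=; rewrite hasE_cons negb_or => /andP[Hg Hp] /andP[Hne Hn].
apply/andP; split; last exact: IH.
by rewrite /grem /= Hg eq_sym Hne.
Qed.

Lemma hasE_short g l m v s : connected_graph g -> path g v s -> hasE l m v s ->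
  exists2 a, (a == l) || (a == m) & dist g v a < size s.
Proof.
move=> Hcon; elim: s v => [|y s IH] v //= /andP[Hvy Hp]; rewrite hasE_cons.
case/orP => [/eqP E|/(IH _ Hp)[a Ha Hd]].
  exists v; last by rewrite dist0.
  have : v \in [set l; m] by rewrite E set21.
  by rewrite !inE.
exists a => //; apply: leq_ltn_trans (dist_step Hvy (Hcon y a)) _; by rewrite ltnS.
Qed.

Lemma par_uniq g l m (col : T -> bool) x s :
  col l = col m -> (forall a b, g a b -> [set a; b] != [set l; m] -> col a != col b) ->
  uniq (x :: s) -> path g x s ->
  odd (size s) = col x (+) col (last x s) (+) hasE l m x s.
Proof.
move=> Hlm Hf; elim: s x => [|y s IH] x; first by rewrite /= addbb.
rewrite [uniq _]/= => /andP[Hx Hu] /= /andP[Hxy Hp].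
rewrite hasE_cons (IH _ Hu Hp).
case E: ([set l; m] == [set x; y]).
  have Hn : hasE l m y s = false.
    apply/negP => /hasE_mem [H1 H2]; move/eqP: E => /set2_eq.
    by case => [[Ex _]|[_ Ex]]; rewrite -Ex ?H1 ?H2 in Hx.
  have Hc : col x = col y by move/eqP: E => /set2_eq [[<- <-]|[<- <-]].
  by rewrite Hn Hc /=; case: (col y); case: (col _).
have := Hf _ _ Hxy; rewrite eq_sym E => /(_ isT).
by case: (col x); case: (col y); case: (col _); case: (hasE _ _ _ _).
Qed.

End Par.

Section Main.
Variables (T : finType) (g : rel T) (c : seq T).
Hypotheses (Hsimp : simple_graph g) (Hcon : connected_graph g)
  (Hcard : #|edges g| = #|T|) (Hcyc : is_cycle g c) (Hodd : odd (size c)).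

Lemma Hsym : symmetric g. Proof. by case: Hsimp. Qed.
Lemma Hirr x : ~~ g x x. Proof. by case: Hsimp. Qed.
Lemma Huniq : uniq c. Proof. by case/and3P: Hcyc. Qed.
Lemma Hcy : cycle g c. Proof. by case/and3P: Hcyc. Qed.
Lemma Hsz : 2 < size c. Proof. by case/and3P: Hcyc. Qed.

Lemma hsym l m : connect_sym (grem g l m).
Proof. exact/sym_connect_sym/grem_sym/Hsym. Qed.

Lemma g_neq l m : g l m -> l != m.
Proof. by apply: contraTneq => ->; apply: Hirr. Qed.

Lemma uniq_disj (s1 s2 : seq T) z : uniq (s1 ++ s2) -> z \in s1 -> z \in s2 -> False.
Proof.
rewrite cat_uniq => /and3P[_ /hasP H _] H1 H2; apply: H; by exists z.
Qed.

Lemma cycle_h l m : ~~ on_cycle c l m -> cycle (grem g l m) c.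
Proof.
move=> Hnc; apply: (cycle_from_next Huniq) => x Hx.
rewrite /grem /= (next_cycle Hcy Hx) /=; apply/negP => /eqP /set2_eq E.
move: Hnc; rewrite /on_cycle.
by case: E => [[<- <-]|[<- <-]]; rewrite Hx mem_next Hx eqxx ?orbT.
Qed.

Lemma bridge l m : g l m -> ~~ on_cycle c l m -> ~ connect (grem g l m) l m.
Proof.
move=> Hlm Hnc Hc.
have Hall v : connect (grem g l m) v l := reroute Hsym Hc (Hcon v l).
have Hpar := tree_parity Hall (card_grem Hlm Hcard).
have := @odd_cycle_col _ _ (fun x => odd (dist (grem g l m) x l)) c Hpar (cycle_h Hnc).
by rewrite Hodd.
Qed.

Lemma cycle_conn l m : ~~ on_cycle c l m ->
  forall y z, y \in c -> z \in c -> connect (grem g l m) y z.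
Proof.
move=> /cycle_h; case: c => [|c0 p] //= Hp.
have H y : y \in c0 :: p -> connect (grem g l m) c0 y.
  by move=> Hy; apply: (path_connect Hp); rewrite -cats1 -cat_cons mem_cat Hy.
move=> y z /H Hy /H Hz; apply: connect_trans Hz; by rewrite hsym.
Qed.

Lemma first_E l m x s : path g x s -> hasE l m x s ->
  exists s1 a b s2, [/\ s = s1 ++ b :: s2, last x s1 = a, [set a; b] = [set l; m],
     path (grem g l m) x s1 & path g b s2].
Proof.
elim: s x => [|y s IH] x //= /andP[Hxy Hp]; rewrite hasE_cons.
case E: ([set l; m] == [set x; y]); rewrite /=.
  by move=> _; exists [::], x, y, s; split => //; apply/esym/eqP.
move=> HE; have [s1 [a [b [s2 [-> Ha Hab Hp1 Hp2]]]]] := IH _ Hp HE.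
exists (y :: s1), a, b, s2; split => //=.
by rewrite Hp1 andbT /grem /= Hxy eq_sym E.
Qed.

Lemma split_short l m x s : path g x s -> size s = dist g x (last x s) -> hasE l m x s ->
  exists a b, [/\ [set a; b] = [set l; m], connect (grem g l m) x a &
     connect (grem g l m) b (last x s)].
Proof.
move=> Hp Hs HE; have Hu := short_uniq Hp Hs.
have [s1 [a [b [s2 [Es Ha Hab Hp1 Hp2]]]]] := first_E Hp HE.
exists a, b; split => //; first by apply/connectP; exists s1.
have HnE : ~~ hasE l m b s2.
  apply/negP => /hasE_mem [H1 H2].
  have Ha' : a \in b :: s2.
    have : a \in [set l; m] by rewrite -Hab set21.
    by rewrite !inE => /orP[]/eqP->.
  apply: (uniq_disj (s1 := x :: s1) (s2 := b :: s2) (z := a)) Ha'.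
    by rewrite cat_cons -Es.
  by rewrite -Ha mem_last.
apply/connectP; exists s2; first exact: noE_path.
by rewrite Es last_cat.
Qed.

Lemma side l m x : g l m -> on_path_to_C g c l m x ->
  [/\ ~~ on_cycle c l m, ~ in_compC g c l m x &
    exists a b, [/\ [set a; b] = [set l; m], connect (grem g l m) x a &
      exists2 w, w \in c & connect (grem g l m) b w]].
Proof.
move=> Hlm [v [[Hv Hmin] [s [Hp Hl Hs HE]]]].
have HE' : hasE l m x s := HE.
have Hnc : ~~ on_cycle c l m.
  apply/negP => /and3P[Hlc Hmc _].
  have [a Ha Hd] := hasE_short Hcon Hp HE'.
  have Hac : a \in c by case/orP: Ha => /eqP->.
  by have := Hmin a Hac; rewrite -Hs leqNgt Hd.
have [a [b [Hab Hxa Hbv]]] := split_short Hp (etrans Hs (congr1 _ (esym Hl))) HE'.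
rewrite Hl in Hbv.
have Hex : exists a b, [/\ [set a; b] = [set l; m], connect (grem g l m) x a &
      exists2 w, w \in c & connect (grem g l m) b w].
  by exists a, b; split => //; exists v.
split => //; case => [Hoc|[w Hw Hxw]]; first by rewrite Hoc in Hnc.
apply: (bridge Hlm Hnc).
have Hab' : connect (grem g l m) a b.
  apply: (@connect_trans _ _ x); first by rewrite hsym.
  apply: (connect_trans Hxw); apply: (@connect_trans _ _ v).
    exact: cycle_conn Hnc _ _ Hw Hv.
  by rewrite hsym.
by move: Hab'; case: (set2_eq Hab) => [[-> ->]|[-> ->]] //; rewrite hsym.
Qed.


Lemma tree_col_core l m : g l m -> l \in c -> next c l = m ->
  exists col : T -> bool, col l = col m /\
    forall x y, g x y -> [set x; y] != [set l; m] -> col x != col y.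
Proof.
move=> Hlm Hlc Hn.
have Hmc : m \in c by rewrite -Hn mem_next.
have := rot_index Hmc; set p := (_ ++ _) => Ec.
have Hu : uniq (m :: p) by rewrite -Ec rot_uniq Huniq.
have Hcy' : cycle g (m :: p) by rewrite -Ec rot_cycle Hcy.
have Hsz' : size p = (size c).-1 by rewrite -(size_rot (index m c) c) Ec.
have Hn' : next (m :: p) l = m by rewrite -Ec next_rot ?Huniq.
have Hlm' := g_neq Hlm.
have Hlp : l \in p.
  by have := Hlc; rewrite -(mem_rot (index m c)) Ec inE (negbTE Hlm').
have Hlast : last m p = l.
  move: Hn'; rewrite next_nth inE Hlp orbT /= eq_sym (negbTE Hlm') => Hnth.
  have Hi : (index l p).+1 = size p.
    apply/eqP; rewrite eqn_leq index_mem Hlp andTb leqNgt; apply/negP => Hlt.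
    have := mem_nth m Hlt; rewrite Hnth => Hm.
    by move: Hu; rewrite /= Hm.
  by rewrite -nth_last -Hi /= nth_index.
have Hp : path g m p by move: Hcy'; rewrite /= rcons_path => /andP[].
have HnE : ~~ hasE l m m p.
  case: p Hu Hlp Hlast Hp Hsz' {Ec Hcy' Hn'} => [|y p'] //= Hu _ Hlast _ Hsz'.
  rewrite hasE_cons negb_or; apply/andP; split.
    apply/negP => /eqP /set2_eq [[El _]|[El _]]; first by rewrite El eqxx in Hlm'.
    subst y.
    case: p' Hu Hlast Hsz' => [|z p''] Hu Hlast Hsz'.
      by move: Hsz Hsz'; case: (size c) => [|[|[|]]].
    have := mem_last z p''; rewrite /= in Hlast; rewrite Hlast => Hl.
    by move: Hu Hl; rewrite /= !inE => /and4P[_ /negP H _ _] /H.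
  apply/negP => /hasE_mem [_ Hm]; by move: Hu; rewrite /= Hm.
have Hc : connect (grem g l m) l m.
  rewrite hsym; apply/connectP; exists p => //; exact: noE_path.
have Hall v : connect (grem g l m) v m.
  by apply: reroute Hsym Hc _ _ (Hcon v m).
have Hpar := tree_parity Hall (card_grem Hlm Hcard).
exists (fun v => odd (dist (grem g l m) v m)); split.
  have := path_col Hpar (noE_path Hp HnE); rewrite Hlast => ->.
  rewrite Hsz'; move: Hodd Hsz; case: (size c) => //= n.
  by move=> /negbTE ->; rewrite addbF.
move=> x y Hxy Hne; apply: Hpar; by rewrite /grem /= Hxy Hne.
Qed.

Lemma tree_col l m : g l m -> on_cycle c l m ->
  exists col : T -> bool, col l = col m /\
    forall x y, g x y -> [set x; y] != [set l; m] -> col x != col y.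
Proof.
move=> Hlm /and3P[Hl Hm /orP[]/eqP Hn]; first exact: tree_col_core.
have Hml : g m l by rewrite Hsym.
have [col [H1 H2]] := tree_col_core Hml Hm Hn.
exists col; split => // x y Hxy; rewrite [[set l; m]]setUC; exact: H2.
Qed.

Lemma near l m v : exists x s, [/\ (x == l) || (x == m), distE g l m v = dist g v x,
  path g v s /\ last v s = x, size s = dist g v x & ~~ hasE l m v s].
Proof.
pose x := if dist g v l <= dist g v m then l else m.
have Hx : (x == l) || (x == m) by rewrite /x; case: ifP; rewrite eqxx ?orbT.
have Hd : distE g l m v = dist g v x.
  by rewrite /distE /x; case: leqP.
have Hmin a : (a == l) || (a == m) -> dist g v x <= dist g v a.
  rewrite -Hd /distE => /orP[]/eqP->; [exact: geq_minl|exact: geq_minr].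
have [s [Hp Hl Hs]] := dist_ex (Hcon v x).
exists x, s; split => //; apply/negP => HE.
have [a Ha Hda] := hasE_short Hcon Hp HE.
by have := Hmin a Ha; rewrite leqNgt -Hs Hda.
Qed.


Lemma part1 l m x : g l m ->
  ((~~ on_cycle c l m /\ ~ in_compC g c l m x) <-> on_path_to_C g c l m x).
Proof.
move=> Hlm; split; last by move=> /(side Hlm) [H1 H2 _].
case=> Hnc Hin.
have [c0 Hc0] : exists c0, c0 \in c.
  by move: Hsz; case: c => [|c0 p] //; exists c0; rewrite inE eqxx.
case: (@arg_minnP _ c0 (fun w => w \in c) (fun w => dist g x w) Hc0) => v Hv Hmin.
exists v; split; first by split.
have [s [Hp Hl Hs]] := dist_ex (Hcon x v).
case HE: (hasE l m x s); first by exists s; split.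
exfalso; apply: Hin; right; exists v => //.
by apply/connectP; exists s => //; apply: noE_path Hp _; rewrite HE.
Qed.

Lemma fpar l m (col : T -> bool) v : col l = col m ->
  (forall a b, g a b -> [set a; b] != [set l; m] -> col a != col b) ->
  odd (distE g l m v) = col v (+) col l.
Proof.
move=> H1 H2; have [x [s [Hx Hd [Hp Hl] Hs HnE]]] := near l m v.
have Hu : uniq (v :: s) by apply: short_uniq Hp _; rewrite Hl Hs.
rewrite Hd -Hs (par_uniq H1 H2 Hu Hp) (negbTE HnE) Hl addbF.
by case/orP: Hx => /eqP->; rewrite ?H1.
Qed.

Lemma part_a l m i j : g l m -> on_cycle c l m -> on_sp g l m i j ->
  odd (distE g l m i + distE g l m j) != odd (dist g i j).
Proof.
move=> Hlm Hoc [s [Hp Hl Hs HE]].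
have [col [H1 H2]] := tree_col Hlm Hoc.
have Hu : uniq (i :: s) by apply: short_uniq Hp _; rewrite Hl Hs.
have HE' : hasE l m i s := HE.
rewrite -Hs (par_uniq H1 H2 Hu Hp) HE' Hl oddD !(fpar _ H1 H2).
by case: (col i); case: (col j); case: (col l).
Qed.

Lemma part_b l m i j : g l m -> on_cycle c l m -> ~ on_sp g l m i j ->
  odd (distE g l m i + distE g l m j) = odd (dist g i j).
Proof.
move=> Hlm Hoc Hnsp.
have [col [H1 H2]] := tree_col Hlm Hoc.
have [s [Hp Hl Hs]] := dist_ex (Hcon i j).
have Hu : uniq (i :: s) by apply: short_uniq Hp _; rewrite Hl Hs.
have HnE : hasE l m i s = false.
  by apply/negP => HE; apply: Hnsp; exists s; split.
rewrite -Hs (par_uniq H1 H2 Hu Hp) HnE Hl oddD !(fpar _ H1 H2).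
by case: (col i); case: (col j); case: (col l).
Qed.

Lemma part_c l m i j : g l m -> on_path_to_C g c l m i -> on_path_to_C g c l m j ->
  odd (distE g l m i + distE g l m j) = odd (dist g i j).
Proof.
move=> Hlm Hi Hj.
have [Hnc Hini [ai [bi [Habi Hiai [wi Hwi Hbwi]]]]] := side Hlm Hi.
have [_ Hinj _] := side Hlm Hj.
set h := grem g l m.
have Hfar y z : ~ in_compC g c l m y -> connect h y z -> z \in c -> False.
  by move=> Hn Hyz Hz; apply: Hn; right; exists z.
have NB y : ~ in_compC g c l m y -> ~ connect h y bi.
  by move=> Hn Hyb; apply: (Hfar _ _ Hn (connect_trans Hyb Hbwi) Hwi).
have Inab z : z \in [set l; m] -> z = ai \/ z = bi.
  by rewrite -Habi => /set2P.
have [c0 Hc0] : exists c0, c0 \in c.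
  by move: Hsz; case: c => [|c0 p] //; exists c0; rewrite inE eqxx.
pose w0 := next c c0.
have Hgc : g c0 w0 := next_cycle Hcy Hc0.
have Hoc0 : on_cycle c c0 w0 by rewrite /on_cycle Hc0 mem_next Hc0 eqxx.
have [col [Hc1 Hc2]] := tree_col Hgc Hoc0.
have Hpf y s : ~ in_compC g c l m y -> uniq (y :: s) -> path h y s ->
    odd (size s) = col y (+) col (last y s).
  move=> Hn Hu Hp.
  have Hpg : path g y s by apply: sub_path Hp => a b /andP[].
  rewrite (par_uniq Hc1 Hc2 Hu Hpg).
  case HE: (hasE c0 w0 y s); last by rewrite addbF.
  have [H1 _] := hasE_mem HE.
  by case: (Hfar _ _ Hn (path_connect Hp H1) Hc0).
have Hnear y : ~ in_compC g c l m y ->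
    odd (distE g l m y) = col y (+) col ai /\ connect h y ai.
  move=> Hn; have [x [s [Hx Hd [Hp Hl] Hs HnE]]] := near l m y.
  have Hph := noE_path Hp HnE.
  have Hyx : connect h y x by apply/connectP; exists s.
  have Hxa : x = ai.
    have : x \in [set l; m] by rewrite !inE.
    by case/Inab => // Exb; case: (NB _ Hn); rewrite -Exb.
  split; last by rewrite -Hxa.
  have Hu : uniq (y :: s) by apply: short_uniq Hp _; rewrite Hl Hs.
  by rewrite Hd -Hs (Hpf y s Hn Hu Hph) Hl Hxa.
have [Hdi Hci] := Hnear i Hini.
have [Hdj Hcj] := Hnear j Hinj.
have [s [Hp Hl Hs]] := dist_ex (Hcon i j).
have Hu : uniq (i :: s) by apply: short_uniq Hp _; rewrite Hl Hs.
have HnE : ~~ hasE l m i s.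
  apply/negP => HE.
  have [a [b [Hab Hia Hbj]]] := split_short Hp (etrans Hs (congr1 _ (esym Hl))) HE.
  rewrite Hl in Hbj.
  have Ea : a = ai.
    have : a \in [set l; m] by rewrite -Hab set21.
    by case/Inab => // Eab; case: (NB _ Hini); rewrite -Eab.
  have Eb : b = ai.
    have : b \in [set l; m] by rewrite -Hab set22.
    by case/Inab => // Ebb; case: (NB _ Hinj); rewrite -Ebb hsym.
  have := g_neq Hlm; case: (set2_eq Hab) => [[<- <-]|[<- <-]]; by rewrite Ea Eb eqxx.
rewrite -Hs (Hpf i s Hini Hu (noE_path Hp HnE)) Hl oddD Hdi Hdj.
by case: (col i); case: (col j); case: (col ai).
Qed.

Lemma main_sec :
  (forall l m i j : T, g l m -> i != j ->
     ((~~ on_cycle c l m /\ ~ in_compC g c l m i /\ ~ in_compC g c l m j)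
      <-> (on_path_to_C g c l m i /\ on_path_to_C g c l m j)))
  /\ (forall l m i j : T, g l m -> on_cycle c l m -> on_sp g l m i j ->
        odd (distE g l m i + distE g l m j) != odd (dist g i j))
  /\ (forall l m i j : T, g l m -> on_cycle c l m -> ~ on_sp g l m i j ->
        odd (distE g l m i + distE g l m j) = odd (dist g i j))
  /\ (forall l m i j : T, g l m -> on_path_to_C g c l m i -> on_path_to_C g c l m j ->
        odd (distE g l m i + distE g l m j) = odd (dist g i j)).
Proof.
split.
  move=> l m i j Hlm _; split.
    by case=> Hnc [Hi Hj]; split; apply/(part1 _ Hlm).
  by case=> /(part1 _ Hlm) [H1 H2] /(part1 _ Hlm) [_ H3].
split; first exact: part_a.
split; first exact: part_b.
exact: part_c.
Qed.

End Main.

Theorem mainTheorem11 (T : finType) (g : rel T) (c : seq T) :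
  simple_graph g -> connected_graph g -> #|edges g| = #|T| ->
  is_cycle g c -> odd (size c) ->
  (forall l m i j : T, g l m -> i != j ->
     ((~~ on_cycle c l m /\ ~ in_compC g c l m i /\ ~ in_compC g c l m j)
      <-> (on_path_to_C g c l m i /\ on_path_to_C g c l m j)))
  /\ (forall l m i j : T, g l m -> on_cycle c l m -> on_sp g l m i j ->
        odd (distE g l m i + distE g l m j) != odd (dist g i j))
  /\ (forall l m i j : T, g l m -> on_cycle c l m -> ~ on_sp g l m i j ->
        odd (distE g l m i + distE g l m j) = odd (dist g i j))
  /\ (forall l m i j : T, g l m -> on_path_to_C g c l m i -> on_path_to_C g c l m j ->
        odd (distE g l m i + distE g l m j) = odd (dist g i j)).
Proof. by move=> *; apply: main_sec. Qed.
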